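(* Let $G=(V,E)$ be a diamond-free graph and $xy\in E$. For $i\ge 1$ let $N_i=\{z\in V:\ \min(\mathrm{dist}_G(z,x),\mathrm{dist}_G(z,y))=i\}$, and suppose $N_2=\{u_1,\dots,u_k\}$ is an independent set. For $j\in\{1,\dots,k\}$ let $T_j=\{t\in N_3:\ N(t)\cap N_2=\{u_j\}\}$. Let $Y=V\setminus(\{x,y\}\cup N_1\cup N_2\cup N_3)$. Let $z\in N_4$ have no neighbor in $Y$, and suppose $z$ is adjacent to some $t_i\in T_i$. Then every dominating induced matching $M$ of $G$ with $xy\in M$ contains the edge $u_it_i$. Moreover, if $|N(z)\cap T_i|\ge 2$, then $G$ has no dominating induced matching $M$ with $xy\in M$.
   Context: All graphs are finite, simple and undirected; $\mathrm{dist}_G$ is the shortest-path distance and $N(v)$ the set of neighbors of $v$. A set $M$ of edges is a dominating induced matching if every edge of $G$ shares at least one vertex with exactly one edge of $M$. A diamond is $K_4$ minus one edge. *)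

(* Defs.v *)
From mathcomp Require Import all_boot.
Set Implicit Arguments. Unset Strict Implicit. Unset Printing Implicit Defensive.

(* A finite simple graph: vertex type V : finType, adjacency e : rel V,
   assumed symmetric and irreflexive in the theorem. *)

Section Graph.
Variables (V : finType) (e : rel V).

Definition walk_len (a b : V) (n : nat) : Prop :=
  exists s : seq V, [/\ path e a s, size s = n & last a s = b].

Definition dist_le (a b : V) (n : nat) : Prop :=
  exists m, m <= n /\ walk_len a b m.

Definition layer (x y : V) (i : nat) (z : V) : Prop :=
  (dist_le z x i \/ dist_le z y i) /\
  ~ (exists j, j < i /\ (dist_le z x j \/ dist_le z y j)).

(* diamond = K4 minus an edge; diamond-free = no induced diamond *)
Definition diamond_free : Prop :=
  forall a b c d : V, a != b -> ~~ e a b -> e c d ->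
    e a c -> e a d -> e b c -> e b d -> False.

(* edges are represented as 2-element vertex sets *)
Definition is_edge (f : {set V}) : Prop := exists u v, e u v /\ f = [set u; v].

(* M is a dominating induced matching: M is a set of edges, and every edge
   of G shares at least one vertex with exactly one edge of M. *)
Definition dim (M : {set {set V}}) : Prop :=
  (forall f, f \in M -> is_edge f) /\
  (forall u v, e u v -> #|[set m in M | m :&: [set u; v] != set0]| = 1).

End Graph.

(* Main.v *)
Require Import Defs.
From mathcomp Require Import all_boot.

Set Implicit Arguments. Unset Strict Implicit. Unset Printing Implicit Defensive.

Section S.
Variables (V : finType) (e : rel V) (x y : V).
Hypotheses (esym : symmetric e) (eirr : irreflexive e).

Definition Dxy a j := dist_le e a x j \/ dist_le e a y j.

Lemma dist_refl a : dist_le e a a 0.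
Proof. exists 0; split => //; by exists [::]. Qed.

Lemma dist_step a b c n : e a b -> dist_le e b c n -> dist_le e a c n.+1.
Proof.
move=> eab [m [lem [s [ps ss ls]]]].
exists m.+1; split; first by rewrite ltnS.
by exists (b :: s); split; rewrite /= ?eab ?ss.
Qed.

Lemma Dstep a b n : e a b -> Dxy b n -> Dxy a n.+1.
Proof. by move=> eab [h|h]; [left|right]; apply: dist_step eab h. Qed.

Lemma D0 a : Dxy a 0 -> a = x \/ a = y.
Proof.
have h c : dist_le e a c 0 -> a = c.
  move=> [m [lem [s [_ ss ls]]]]; move: lem; rewrite leqn0 => /eqP m0.
  by move: ss ls; rewrite m0; case: s.
by case=> [/h|/h]; auto.
Qed.

Lemma layer_down n w : layer e x y n.+1 w -> exists v, e w v /\ layer e x y n v.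
Proof.
move=> [Dw nD].
have key : forall c, dist_le e w c n.+1 -> (forall j, j < n.+1 -> ~ dist_le e w c j) ->
   exists v, e w v /\ dist_le e v c n.
  move=> c [m [lem [s [ps ss ls]]]] hn.
  case: (ltnP m n.+1) => hm.
    by exfalso; apply: (hn m hm); exists m; split => //; exists s.
  have mE : m = n.+1 by apply/eqP; rewrite eqn_leq lem hm.
  rewrite mE in ss.
  case: s ps ss ls => [|v s] //= /andP [ev ps] [ss] ls.
  exists v; split => //; exists n; split => //; by exists s.
have nv : forall v, e w v -> ~ exists j, j < n /\ Dxy v j.
  move=> v ev [j [lj Dj]]; apply nD; exists j.+1; split; first by rewrite ltnS.
  exact: Dstep ev Dj.
case: Dw => Dw.
- have [v [ev Dv]] := key x Dw (fun j lj Dj => nD (ex_intro _ j (conj lj (or_introl Dj)))).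
  exists v; split => //; split; [by left | exact: nv].
- have [v [ev Dv]] := key y Dw (fun j lj Dj => nD (ex_intro _ j (conj lj (or_intror Dj)))).
  exists v; split => //; split; [by right | exact: nv].
Qed.

Lemma layer_no n a j : layer e x y n a -> j < n -> ~ Dxy a j.
Proof. by move=> [_ h] lj Dj; apply: h; exists j. Qed.

Lemma layer1_ne n : layer e x y 1 n -> n != x /\ n != y.
Proof.
move=> L; split; apply/eqP => E; subst; apply: (layer_no L (j:=0)) => //;
  [left|right]; exact: dist_refl.
Qed.

Variable M : {set {set V}}.
Hypotheses (HM : dim e M) (xyM : [set x; y] \in M).

Lemma meetP (m : {set V}) a b : reflect (a \in m \/ b \in m) (m :&: [set a; b] != set0).
Proof.
apply: (iffP (set0Pn (m :&: [set a; b]))) => [[c]|[h|h]].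
- by rewrite !inE => /andP [cm /orP [/eqP E|/eqP E]]; subst; [left|right].
- by exists a; rewrite !inE h eqxx.
- by exists b; rewrite !inE h eqxx orbT.
Qed.

Lemma cover a b : e a b -> exists2 m, m \in M & (a \in m \/ b \in m).
Proof.
move=> eab; have [k Hk] := cards1P (introT eqP (HM.2 a b eab)).
have : k \in [set m in M | m :&: [set a; b] != set0] by rewrite Hk set11.
by rewrite inE => /andP [kM /meetP h]; exists k.
Qed.

Lemma uniq_cover a b f g : e a b -> f \in M -> g \in M ->
  (a \in f \/ b \in f) -> (a \in g \/ b \in g) -> f = g.
Proof.
move=> eab fM gM hf hg; have [k Hk] := cards1P (introT eqP (HM.2 a b eab)).
have : f \in [set m in M | m :&: [set a; b] != set0] by rewrite inE fM; apply/meetP.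
have : g \in [set m in M | m :&: [set a; b] != set0] by rewrite inE gM; apply/meetP.
by rewrite Hk !in_set1 => /eqP -> /eqP ->.
Qed.

Lemma edge_other f a : f \in M -> a \in f -> exists2 b, e a b & f = [set a; b].
Proof.
move=> fM af; have [p [q [epq fE]]] := HM.1 f fM.
move: af; rewrite fE !inE => /orP [/eqP ->|/eqP ->]; first by exists q.
by exists p; [rewrite esym | rewrite setUC].
Qed.

Lemma L1_unmatched n m : n != x -> n != y -> (e n x \/ e n y) -> m \in M -> n \notin m.
Proof.
move=> nx ny hn mM; apply/negP => nm.
case: hn => hn.
- have mE := uniq_cover hn mM xyM (or_introl nm) (or_intror (set21 x y)).
  by move: nm; rewrite mE !inE (negbTE nx) (negbTE ny).
- have mE := uniq_cover hn mM xyM (or_introl nm) (or_intror (set22 x y)).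
  by move: nm; rewrite mE !inE (negbTE nx) (negbTE ny).
Qed.

Lemma matched_L2 v : layer e x y 2 v -> exists2 m, m \in M & v \in m.
Proof.
move=> L; have [n [evn Ln]] := layer_down L.
have [c [enc Lc]] := layer_down Ln.
have [nx ny] := layer1_ne Ln.
have hn : e n x \/ e n y by case: (D0 Lc.1) => E; subst; auto.
have [m mM hm] := cover evn.
exists m => //; case: hm => // nm.
by move: (L1_unmatched nx ny hn mM); rewrite nm.
Qed.

Lemma part1 z u t : layer e x y 4 z ->
    (forall w, e z w -> w = x \/ w = y \/ layer e x y 1 w \/ layer e x y 2 w
                       \/ layer e x y 3 w) ->
    layer e x y 2 u -> e u t -> e z t -> [set u; t] \in M.
Proof.
move=> Lz Hz Lu eut ezt.
have [m mM um] := matched_L2 Lu.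
have [b eub mE] := edge_other mM um.
case: (eqVneq b t) => [<-|bt]; first by rewrite -mE.
have ut : u != t by apply/eqP => E; subst; rewrite eirr in eut.
have tm : t \notin m by rewrite mE !inE eq_sym (negbTE ut) eq_sym (negbTE bt).
have tun : forall g, g \in M -> t \notin g.
  move=> g gM; apply/negP => tg.
  have := uniq_cover eut mM gM (or_introl um) (or_intror tg).
  by move=> E; move: tm; rewrite E tg.
have [h hM hh] := cover ezt.
have zh : z \in h by case: hh => // th; move: (tun h hM); rewrite th.
have [w ezw hE] := edge_other hM zh.
have Lw : layer e x y 3 w.
  have nz : forall j, j < 4 -> ~ Dxy z j by move=> j; apply: layer_no.
  case: (Hz w ezw) => [E|[E|[L|[L|L]]]] //.
  - by exfalso; apply: (nz 1 isT); apply: Dstep ezw _; rewrite E; left; apply: dist_refl.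
  - by exfalso; apply: (nz 1 isT); apply: Dstep ezw _; rewrite E; right; apply: dist_refl.
  - by exfalso; apply: (nz 2 isT); apply: Dstep ezw L.1.
  - by exfalso; apply: (nz 3 isT); apply: Dstep ezw L.1.
have [v [ewv Lv]] := layer_down Lw.
have [k kM vk] := matched_L2 Lv.
have wh : w \in h by rewrite hE set22.
have hk := uniq_cover ewv hM kM (or_introl wh) (or_intror vk).
move: vk; rewrite -hk hE !inE => /orP [/eqP E|/eqP E]; subst.
- by exfalso; apply: (layer_no Lz (j:=2)) => //; exact: Lv.1.
- by rewrite eirr in ewv.
Qed.

End S.

Theorem proposition1 (V : finType) (e : rel V) (x y : V) :
  symmetric e -> irreflexive e -> diamond_free e -> e x y ->
  (* N_2 is an independent set *)
  (forall u v, layer e x y 2 u -> layer e x y 2 v -> ~~ e u v) ->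
  forall (z u t : V),
    layer e x y 4 z ->
    (* z has no neighbour in Y = V \ ({x,y} u N1 u N2 u N3) *)
    (forall w, e z w -> w = x \/ w = y \/ layer e x y 1 w \/ layer e x y 2 w
                       \/ layer e x y 3 w) ->
    layer e x y 2 u ->
    (* t belongs to T_u *)
    layer e x y 3 t ->
    (forall w, layer e x y 2 w -> (e t w <-> w = u)) ->
    e z t ->
    (forall M : {set {set V}}, dim e M -> [set x; y] \in M -> [set u; t] \in M) /\
    ((exists t1 t2, t1 != t2 /\
        (forall t', t' \in [:: t1; t2] ->
           [/\ e z t', layer e x y 3 t' &
               forall w, layer e x y 2 w -> (e t' w <-> w = u)])) ->
     ~ exists M : {set {set V}}, dim e M /\ [set x; y] \in M).
Proof.
move=> esym eirr _ _ _ z u t Lz Hz Lu Lt Ht ezt; split.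
  move=> M HM xyM; apply: (part1 esym eirr HM xyM Lz Hz Lu _ ezt).
  by rewrite esym; apply/(Ht u Lu).
move=> [t1 [t2 [neq H]]] [M [HM xyM]].
have [ez1 _ H1] := H t1 (mem_head _ _).
have [ez2 _ H2] := H t2 ltac:(by rewrite !inE eqxx orbT).
have eu1 : e u t1 by rewrite esym; apply/(H1 u Lu).
have eu2 : e u t2 by rewrite esym; apply/(H2 u Lu).
have M1 := part1 esym eirr HM xyM Lz Hz Lu eu1 ez1.
have M2 := part1 esym eirr HM xyM Lz Hz Lu eu2 ez2.
have E := uniq_cover HM eu1 M1 M2 (or_introl (set21 _ _)) (or_introl (set21 _ _)).
have : t1 \in [set u; t2] by rewrite -E set22.
rewrite !inE => /orP [/eqP E1|/eqP E1].
- by subst; rewrite eirr in eu1.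
- by rewrite E1 eqxx in neq.
Qed.
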